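(* There is an absolute constant $C$ such that for all integers $n \ge 3$, $g(n,3) \le C\, n\, (\log_2 n)^{\log_2 7}$.
   Context: For integers $2\le k\le n$, let $S_n$ denote the set of permutations of $[n]=\{1,\dots,n\}$ (written as sequences), and $S_{n,k}$ the set of all sequences of $k$ distinct elements of $[n]$. A sequence $\kappa\in S_{n,k}$ is a subsequence of a permutation $\pi\in S_n$ if its elements appear in $\pi$ in the same relative order as in $\kappa$. A perfect sequence covering array ${\rm PSCA}(n,k)$ with multiplicity $\lambda$ (a positive integer) is a multiset $X$ of elements of $S_n$ such that every $\kappa\in S_{n,k}$ is a subsequence of exactly $\lambda$ elements of $X$ (counted with multiplicity). $g(n,k)$ denotes the smallest $\lambda$ for which a ${\rm PSCA}(n,k)$ with multiplicity $\lambda$ exists. *)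

(* Defs.v *)
From mathcomp Require Import all_boot.
From Stdlib Require Import Reals.

Definition is_perm (n : nat) (p : seq nat) : bool := perm_eq p (iota 1 n).

Definition is_kseq (n k : nat) (s : seq nat) : bool :=
  [&& size s == k, uniq s & all (fun x => (1 <= x <= n)%N) s].

(* X (a multiset of permutations, given as a list) is a PSCA(n,k) with
   multiplicity lam: lam positive, every element of X a permutation of [n],
   and every kappa in S_{n,k} is a subsequence of exactly lam members of X
   (counted with multiplicity). *)
Definition is_PSCA (n k : nat) (X : seq (seq nat)) (lam : nat) : Prop :=
  (0 < lam)%N /\ all (is_perm n) X /\
  forall s : seq nat, is_kseq n k s -> count (subseq s) X = lam.

(* g(n,k) <= b  :<=>  some PSCA(n,k) has multiplicity lam <= b
   (g is the least such multiplicity). *)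
Definition g_le (n k : nat) (b : R) : Prop :=
  exists (X : seq (seq nat)) (lam : nat), is_PSCA n k X lam /\ (INR lam <= b)%R.

Definition log2 (x : R) : R := (ln x / ln 2)%R.

(* Main.v *)
Require Import Defs.
From mathcomp Require Import all_boot.
From Stdlib Require Import Reals.
From Stdlib Require Import Lra.

Lemma ln2_gt0 : (0 < ln 2)%R.
Proof. rewrite <- ln_1; apply ln_increasing; lra. Qed.

Lemma INR_expn a b : INR (expn a b) = (INR a ^ b)%R.
Proof.
elim: b => [|b IH]; first by rewrite expn0.
by rewrite expnS mult_INR IH.
Qed.

Lemma key_real (k : nat) (x : R) : (2 ^ k <= x)%R -> (7 ^ k <= Rpower x (log2 7))%R.
Proof.
move=> hx.
have l2 := ln2_gt0.
have l7 : (0 < ln 7)%R by rewrite <- ln_1; apply ln_increasing; lra.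
have e : Rpower (2 ^ k) (log2 7) = (7 ^ k)%R.
  rewrite -(@Rpower_pow k 7); last lra.
  rewrite /Rpower /log2 ln_pow; last lra.
  congr exp; field; lra.
rewrite -e; apply: Rle_Rpower_l.
  rewrite /log2; apply: Rlt_le; apply: Rdiv_lt_0_compat => //.
split => //; apply: pow_lt; lra.
Qed.

Lemma ln_le' x y : (0 < x)%R -> (x <= y)%R -> (ln x <= ln y)%R.
Proof.
move=> h0 h; case: (Rle_lt_or_eq_dec x y h) => [lt|->]; last exact: Rle_refl.
by apply: Rlt_le; apply: ln_increasing.
Qed.

Lemma log2_ge (K n : nat) : expn 2 K <= n -> (INR K <= log2 (INR n))%R.
Proof.
move=> h; have l2 := ln2_gt0.
have hp : (0 < 2 ^ K)%R by apply: pow_lt; lra.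
have hn : (2 ^ K <= INR n)%R by rewrite -(INR_expn 2 K) /=; apply: le_INR; apply/leP.
have := ln_le' _ _ hp hn; rewrite ln_pow; last lra.
move=> hl; rewrite /log2; apply: (Rmult_le_reg_r (ln 2)) => //.
rewrite /Rdiv Rmult_assoc Rinv_l; lra.
Qed.


From mathcomp Require Import all_algebra all_field.
From mathcomp Require Import zify ring.
From mathcomp Require Import ssrnat.
Set Implicit Arguments. Unset Strict Implicit. Unset Printing Implicit Defensive.
Import GRing.Theory.


Definition Good (T : finType) (S : seq {ffun T -> nat}) (lam : nat) : Prop :=
  [/\ 0 < lam, (forall r, r \in S -> injective r),
      (forall u v, u != v -> count (fun r : {ffun T -> nat} => r u < r v) S = 3 * lam) &
      (forall u v w, u != v -> u != w -> v != w ->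
          count (fun r : {ffun T -> nat} => r u < r v < r w) S = lam)].

Lemma Good_inj (T U : finType) (h : U -> T) (S : seq {ffun T -> nat}) lam : injective h -> Good S lam ->
  Good [seq [ffun u => r (h u)] | r : {ffun T -> nat} <- S] lam.
Proof.
move=> hi [l0 Hi H2 H3]; split=> //.
- move=> r' /mapP [r rS ->] x y; rewrite !ffunE => /(Hi r rS); exact: hi.
- move=> u v uv; rewrite count_map -(H2 (h u) (h v)); last by rewrite (inj_eq hi).
  by apply: eq_count => r /=; rewrite !ffunE.
- move=> u v w uv uw vw; rewrite count_map -(H3 (h u) (h v) (h w)); try by rewrite (inj_eq hi).
  by apply: eq_count => r /=; rewrite !ffunE.
Qed.

Lemma Good_card (T U : finType) (S : seq {ffun T -> nat}) lam : #|U| <= #|T| -> Good S lam ->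
  exists S' : seq {ffun U -> nat}, Good S' lam.
Proof.
move=> le; pose h (u : U) : T := enum_val (widen_ord le (enum_rank u)).
have hi : injective h.
  move=> x y /enum_val_inj /(congr1 val) /= /val_inj; exact: enum_rank_inj.
by move=> G; eexists; apply: (Good_inj hi G).
Qed.


Section Constr.
Variable F : finFieldType.
Implicit Types (s : {ffun F -> nat}) (S : seq {ffun F -> nat}) (p q : F * F) (d : option F).

Definition line (d : option F) (p : F * F) : F :=
  if d is Some c then (p.2 - c * p.1)%R else p.1.
Definition coord (d : option F) (p : F * F) : F :=
  if d is Some c then p.1 else p.2.
Definition classes : seq (option F) := None :: [seq Some c | c <- enum F].

Lemma line_coord_inj d p q : line d p = line d q -> coord d p = coord d q -> p = q.
Proof.
case: p q d => [x y] [x' y'] [c|] /= => [E1 E2|-> ->//].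
by subst x'; congr pair; move/addIr: E1.
Qed.

Lemma count_classes p q : p != q ->
  count (fun d => line d p == line d q) classes = 1.
Proof.
case: p q => [x y] [x' y'] pq; rewrite /classes /=.
have [exx|nxx] := eqVneq x x'.
  subst x'; have yy : y != y' by apply: contraNneq pq => ->.
  rewrite add1n; congr S; apply/eqP; rewrite -leqn0 leqNgt -has_count.
  apply/hasP => -[_ /mapP [c _ ->]] /=; rewrite (inj_eq (addIr _)); exact/negP.
rewrite add0n count_map.
have nz : (x - x' != 0)%R by rewrite subr_eq0.
have -> : count (preim Some (fun d => line d (x, y) == line d (x', y'))) (enum F)
        = count (pred1 ((y - y') / (x - x'))%R) (enum F).
  apply: eq_count => c /=; apply/eqP/eqP => [E|->].
    apply: (mulIf nz); rewrite mulfVK //.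
    rewrite [RHS](_ : _ = (y - c*x) - (y' - c*x') + c*(x-x'))%R; last by ring.
    by rewrite E subrr add0r.
  set k := ((y - y') / (x - x'))%R.
  have hk : (k * (x - x') = y - y')%R by rewrite mulfVK.
  apply/eqP; rewrite -subr_eq0; apply/eqP.
  transitivity (y - y' - k*(x-x'))%R; first by ring.
  by rewrite hk subrr.
by rewrite count_uniq_mem ?enum_uniq ?mem_enum.
Qed.

Lemma lexlt B x1 x2 y1 y2 : y1 < B -> y2 < B ->
  (x1 * B + y1 < x2 * B + y2) = (x1 < x2) || ((x1 == x2) && (y1 < y2)).
Proof.
move=> h1 h2; case: (ltngtP x1 x2) => [lt|lt|->] /=.
- by apply/idP; nia.
- by apply/negbTE; rewrite -leqNgt; nia.
- by rewrite ltn_add2l.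
Qed.

Lemma subK M a b : a <= M -> b <= M -> (M - a < M - b) = (b < a).
Proof. move=> h1 h2; apply/idP/idP; lia. Qed.
Lemma subI M a b : a <= M -> b <= M -> M - a = M - b -> a = b.
Proof. lia. Qed.

Definition mx (s : {ffun F -> nat}) := \max_(x : F) s x.
Definition rev (s : {ffun F -> nat}) : {ffun F -> nat} := [ffun z => mx s - s z].
Definition tau (s : {ffun F -> nat}) (e : bool) := if e then rev s else s.
Definition lexr d (s : {ffun F -> nat}) e : {ffun F * F -> nat} :=
  [ffun p => s (line d p) * (mx s).+1 + tau s e (coord d p)].

Lemma le_mx s z : s z <= mx s.
Proof. exact: leq_bigmax. Qed.

Lemma tau_lt s e z : tau s e z < (mx s).+1.
Proof. by rewrite ltnS; case: e => /=; rewrite ?ffunE ?leq_subr ?le_mx. Qed.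

Lemma tau_ltE s e x y :
  (tau s e x < tau s e y) = if e then s y < s x else s x < s y.
Proof.
case: e => //=; rewrite !ffunE; exact: subK (le_mx s x) (le_mx s y).
Qed.

Lemma tau_inj s e : injective s -> injective (tau s e).
Proof.
move=> si x y; case: e => /= [|/si//]; rewrite !ffunE => E; apply: si.
exact: subI (le_mx s x) (le_mx s y) E.
Qed.

Lemma lexr_lt d s e p q : injective s ->
  (lexr d s e p < lexr d s e q) = (s (line d p) < s (line d q)) ||
     ((line d p == line d q) && (tau s e (coord d p) < tau s e (coord d q))).
Proof. by move=> si; rewrite !ffunE lexlt ?tau_lt // (inj_eq si). Qed.

Lemma lexr_inj d s e : injective s -> injective (lexr d s e).
Proof.
move=> si p q E.
have h1 : ~~ (lexr d s e p < lexr d s e q) by rewrite E ltnn.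
have h2 : ~~ (lexr d s e q < lexr d s e p) by rewrite E ltnn.
rewrite !lexr_lt // !negb_or !negb_and in h1 h2.
case/andP: h1 => a1 b1; case/andP: h2 => a2 b2.
have el : line d p = line d q.
  by apply: si; rewrite -leqNgt in a1; rewrite -leqNgt in a2; apply/anti_leq; rewrite a1 a2.
move: b1 b2; rewrite el eqxx /= => b1 b2.
apply: (@line_coord_inj d) => //; apply: (@tau_inj s e si).
rewrite -leqNgt in b1; rewrite -leqNgt in b2; exact/anti_leq/andP.
Qed.

Definition pairs (S : seq {ffun F -> nat}) d : seq {ffun F * F -> nat} :=
  flatten [seq [:: lexr d s false; lexr d s true] | s <- S].

Lemma count_pairs (P : pred {ffun F * F -> nat}) S d :
  count P (pairs S d) = count (fun s => P (lexr d s false)) S + count (fun s => P (lexr d s true)) S.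
Proof. elim: S => //= s S IH; rewrite /pairs /= in IH *; by rewrite IH addnA addnACA. Qed.

Lemma count_excl (T : eqType) (l : seq T) (A B X : pred T) :
  (forall x, x \in l -> B x = ~~ A x) ->
  count (fun x => A x && X x) l + count (fun x => B x && X x) l = count X l.
Proof.
elim: l => //= x l IH H; rewrite -IH => [|y yl]; last by apply: H; rewrite inE yl orbT.
rewrite H ?inE ?eqxx // addnACA; congr (_ + _); by case: (A x) (X x) => [] [].
Qed.

Section Good.
Variables (S : seq {ffun F -> nat}) (lam : nat).
Hypothesis G : Good S lam.

Lemma class2 d u v : u != v ->
  count (fun r : {ffun F * F -> nat} => r u < r v) (pairs S d) = 6 * lam.
Proof.
move=> uv; case: G => _ Si H2 _; rewrite count_pairs.
have [el|nl] := eqVneq (line d u) (line d v).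
  have cuv : coord d u != coord d v.
    by apply: contra_neq uv => /(line_coord_inj el).
  rewrite (eq_in_count (a2 := fun s => s (coord d u) < s (coord d v))); last first.
    by move=> s sS /=; have si := Si s sS; rewrite lexr_lt // ?tau_ltE el ltnn eqxx.
  rewrite [X in _ + X](eq_in_count (a2 := fun s => s (coord d v) < s (coord d u))); last first.
    by move=> s sS /=; have si := Si s sS; rewrite lexr_lt // ?tau_ltE el ltnn eqxx.
  rewrite !H2 // 1?eq_sym //; lia.
rewrite (eq_in_count (a2 := fun s => s (line d u) < s (line d v))); last first.
  by move=> s sS /=; have si := Si s sS; rewrite lexr_lt // (negbTE nl) orbF.
rewrite [X in _ + X](eq_in_count (a2 := fun s => s (line d u) < s (line d v))); last first.
  by move=> s sS /=; have si := Si s sS; rewrite lexr_lt // (negbTE nl) orbF.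
rewrite !H2 //; lia.
Qed.

Lemma class3 d a b c : a != b -> a != c -> b != c ->
  count (fun r : {ffun F * F -> nat} => r a < r b < r c) (pairs S d)
    + 2 * lam * (line d a == line d c)
  = 2 * lam + lam * (line d a == line d b) + lam * (line d b == line d c).
Proof.
move=> ab ac bc; case: G => l0 Si H2 H3; rewrite count_pairs.
have cne x y : x != y -> line d x = line d y -> coord d x != coord d y.
  by move=> xy el; apply: contra_neq xy => /(line_coord_inj el).
have [eab|nab] := eqVneq (line d a) (line d b);
have [ebc|nbc] := eqVneq (line d b) (line d c);
have [eac|nac] := eqVneq (line d a) (line d c).
- rewrite (eq_in_count (a2 := fun s => s (coord d a) < s (coord d b) < s (coord d c))); last first.
    by move=> s sS /=; have si := Si s sS; rewrite !lexr_lt // ?tau_ltE eab ebc eqxx ltnn.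
  rewrite [X in _ + X + _](eq_in_count (a2 := fun s => s (coord d c) < s (coord d b) < s (coord d a))); last first.
    by move=> s sS /=; have si := Si s sS; rewrite !lexr_lt // ?tau_ltE eab ebc eqxx ltnn /= andbC.
  rewrite !H3 ?cne // 1?eq_sym ?cne //; try lia; by rewrite eab.
- by move: nac; rewrite eab ebc eqxx.
- by move: nbc; rewrite -eab eac eqxx.
- rewrite (eq_in_count (a2 := fun s => (s (coord d a) < s (coord d b)) && (s (line d b) < s (line d c)))); last first.
    by move=> s sS /=; have si := Si s sS; rewrite !lexr_lt // ?tau_ltE eab (negbTE nbc) eqxx ltnn /= orbF.
  rewrite [X in _ + X + _](eq_in_count (a2 := fun s => (s (coord d b) < s (coord d a)) && (s (line d b) < s (line d c)))); last first.
    by move=> s sS /=; have si := Si s sS; rewrite !lexr_lt // ?tau_ltE eab (negbTE nbc) eqxx ltnn /= orbF.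
  rewrite count_excl ?H2 //; first lia.
  move=> s sS; have sab : s (coord d a) != s (coord d b) by rewrite (inj_eq (Si s sS)) cne.
  by rewrite ltn_neqAle -leqNgt eq_sym sab.
- by move: nab; rewrite eac -ebc eqxx.
- rewrite (eq_in_count (a2 := fun s => (s (coord d b) < s (coord d c)) && (s (line d a) < s (line d b)))); last first.
    by move=> s sS /=; have si := Si s sS; rewrite !lexr_lt // ?tau_ltE (negbTE nab) ebc eqxx ltnn /= orbF andbC.
  rewrite [X in _ + X + _](eq_in_count (a2 := fun s => (s (coord d c) < s (coord d b)) && (s (line d a) < s (line d b)))); last first.
    by move=> s sS /=; have si := Si s sS; rewrite !lexr_lt // ?tau_ltE (negbTE nab) ebc eqxx ltnn /= orbF andbC.
  rewrite count_excl ?H2 //; first lia.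
  move=> s sS; have sbc : s (coord d b) != s (coord d c) by rewrite (inj_eq (Si s sS)) cne.
  by rewrite ltn_neqAle -leqNgt eq_sym sbc.
- rewrite (eq_in_count (a2 := pred0)); last first.
    move=> s sS /=; have si := Si s sS; rewrite !lexr_lt // (negbTE nab) (negbTE nbc) /= eac.
    by case: ltngtP.
  rewrite [X in _ + X + _](eq_in_count (a2 := pred0)); last first.
    move=> s sS /=; have si := Si s sS; rewrite !lexr_lt // (negbTE nab) (negbTE nbc) /= eac.
    by case: ltngtP.
  rewrite !count_pred0; lia.
- rewrite (eq_in_count (a2 := fun s => s (line d a) < s (line d b) < s (line d c))); last first.
    by move=> s sS /=; have si := Si s sS; rewrite !lexr_lt // (negbTE nab) (negbTE nbc) /= !orbF.
  rewrite [X in _ + X + _](eq_in_count (a2 := fun s => s (line d a) < s (line d b) < s (line d c))); last first.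
    by move=> s sS /=; have si := Si s sS; rewrite !lexr_lt // (negbTE nab) (negbTE nbc) /= !orbF.
  rewrite !H3 //; lia.
Qed.

Lemma sum2 L u v : u != v ->
  count (fun r : {ffun F * F -> nat} => r u < r v) (flatten [seq pairs S d | d <- L])
  = 6 * lam * size L.
Proof.
move=> uv; elim: L => [|d L IH] /=; first by rewrite muln0.
by rewrite count_cat IH class2 // mulnS.
Qed.

Lemma sum3 L a b c : a != b -> a != c -> b != c ->
  count (fun r : {ffun F * F -> nat} => r a < r b < r c) (flatten [seq pairs S d | d <- L])
    + 2 * lam * count (fun d => line d a == line d c) L
  = 2 * lam * size L + lam * count (fun d => line d a == line d b) L
     + lam * count (fun d => line d b == line d c) L.
Proof.
move=> ab ac bc; elim: L => [|d L IH] /=; first by rewrite !muln0.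
have := class3 d ab ac bc; rewrite count_cat; lia.
Qed.

Definition Xsq := flatten [seq pairs S d | d <- classes].

Lemma Good_sq : Good Xsq (2 * lam * #|F|.+1).
Proof.
have sc : size classes = #|F|.+1 by rewrite /classes /= size_map -cardE.
have G' := G; case: G' => l0 Si H2 H3; split.
- by rewrite !muln_gt0 l0.
- move=> r /flatten_mapP [d _ /flatten_mapP [s sS]].
  by rewrite !inE => /orP [] /eqP ->; apply: lexr_inj; apply: Si.
- by move=> u v uv; rewrite sum2 // sc !mulnA.
- move=> a b c ab ac bc; have := sum3 classes ab ac bc.
  rewrite !count_classes // sc !muln1 => h; apply/eqP; rewrite -(eqn_add2r (2*lam)); apply/eqP.
  by rewrite /Xsq h -addnA addnn -mul2n.
Qed.
End Good.
End Constr.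


Section Conv.
Variable rho : nat -> nat.
Definition lel (i j : nat) := (rho i < rho j) || ((rho i == rho j) && (i <= j)).

Lemma lel_total : total lel.
Proof. move=> i j; rewrite /lel; case: ltngtP => //= _; exact: leq_total. Qed.
Lemma lel_trans : transitive lel.
Proof.
move=> j i k; rewrite /lel; case: (ltngtP (rho i) (rho j)) => //= h1;
case: (ltngtP (rho j) (rho k)) => //= h2; try lia.
Qed.
Lemma lel_anti : antisymmetric lel.
Proof.
move=> i j; rewrite /lel; case: (ltngtP (rho i) (rho j)) => //= _ /andP [] h1 h2; lia.
Qed.

Lemma subseq3 n a b c : a != b -> a != c -> b != c ->
  a \in iota 1 n -> b \in iota 1 n -> c \in iota 1 n ->
  rho a != rho b -> rho a != rho c -> rho b != rho c ->
  subseq [:: a; b; c] (sort lel (iota 1 n)) = (rho a < rho b < rho c).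
Proof.
move=> ab ac bc ai bi ci rab rac rbc.
have us : uniq (sort lel (iota 1 n)) by rewrite sort_uniq iota_uniq.
have uk : uniq [:: a; b; c] by rewrite /= !inE negb_or ab ac bc.
have -> : subseq [:: a; b; c] (sort lel (iota 1 n)) = ([:: a; b; c] == filter (mem [:: a; b; c]) (sort lel (iota 1 n))).
  by apply/(@subseq_uniqP _ [:: a; b; c] _ us)/eqP.
rewrite filter_sort; [|exact: lel_total|exact: lel_trans].
have pe : perm_eq (filter (mem [:: a; b; c]) (iota 1 n)) [:: a; b; c].
  apply: uniq_perm; first by rewrite filter_uniq ?iota_uniq.
    exact: uk.
  move=> x; rewrite mem_filter !inE; apply/andP/idP => [[]//|h]; split=> //.
  by case/or3P: h => /eqP ->.
rewrite (perm_sortP lel_total lel_trans lel_anti _ _ pe).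
have lab : lel a b = (rho a < rho b) by rewrite /lel (negbTE rab) andFb orbF.
have lbc : lel b c = (rho b < rho c) by rewrite /lel (negbTE rbc) andFb orbF.
apply/idP/idP => [h|/andP [h1 h2]].
  have : sorted lel [:: a; b; c] by move/eqP: h => ->; apply: sort_sorted; exact: lel_total.
  by rewrite /= lab lbc andbT.
apply/eqP; rewrite sorted_sort //; first by move=> x y z; apply: lel_trans.
by rewrite /= lab lbc h1 h2.
Qed.
End Conv.

Lemma Good_PSCA (T : finType) (S : seq {ffun T -> nat}) lam n :
  Good S lam -> 0 < n -> n <= #|T| -> exists X, is_PSCA n 3 X lam.
Proof.
case=> l0 Si H2 H3 npos le.
have : 0 < #|T| by lia.
move/card_gt0P => [x0 _].
pose h i := nth x0 (enum T) i.-1.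
have hi i j : i \in iota 1 n -> j \in iota 1 n -> (h i == h j) = (i == j).
  rewrite !mem_iota => hi hj; rewrite /h nth_uniq ?enum_uniq // -?cardE; try by apply: leq_trans le; lia.
  by apply/eqP/eqP; lia.
pose X := (map (fun r : {ffun T -> nat} => sort (lel (fun i => r (h i))) (iota 1 n)) S).
exists X; split=> //; split.
  by apply/allP => p /mapP [r _ ->]; rewrite /is_perm perm_sort.
case=> [|a [|b [|c [|d s]]]] //= /and3P [_ ].
move=> U A; move: U; rewrite /= !inE !negb_or => /and3P [/andP [ab ac] bc _].
move: A => /= /and4P [/andP [ha1 ha2] /andP [hb1 hb2] /andP [hc1 hc2] _].
have ai : a \in iota 1 n by rewrite mem_iota; lia.
have bi : b \in iota 1 n by rewrite mem_iota; lia.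
have ci : c \in iota 1 n by rewrite mem_iota; lia.
rewrite count_map -(H3 (h a) (h b) (h c)); try by rewrite hi.
apply: eq_in_count => r rS /=.
have ri := Si r rS.
rewrite subseq3 //; by rewrite (inj_eq ri) hi.
Qed.


Lemma Good_bool : exists S : seq {ffun bool -> nat}, Good S 1.
Proof.
pose r1 : {ffun bool -> nat} := [ffun b => nat_of_bool b].
pose r2 : {ffun bool -> nat} := [ffun b => nat_of_bool (~~ b)].
exists [:: r1; r1; r1; r2; r2; r2]; split => //.
- have i1 : injective r1 by move=> [] []; rewrite !ffunE.
  have i2 : injective r2 by move=> [] []; rewrite !ffunE.
  by move=> r; rewrite !inE; do !(case: eqP => [->//|_] /=).
- by move=> [] [] //= _; rewrite !ffunE.
- by move=> [] [] [].
Qed.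

Lemma field2 m : 0 < m -> exists F : finFieldType, #|F| = 2 ^ m.
Proof.
move=> m0; have [F _ cF] := @pPrimePowerField 2 m (isT : prime 2) m0.
by exists F.
Qed.

Lemma step m (T : finType) (S : seq {ffun T -> nat}) lam : 0 < m ->
  2 ^ m <= #|T| -> Good S lam ->
  exists (T' : finType) (S' : seq {ffun T' -> nat}),
    2 ^ (m + m) <= #|T'| /\ Good S' (2 * lam * (2 ^ m).+1).
Proof.
move=> m0 le G; have [F cF] := field2 m0.
have le2 : #|F| <= #|T| by rewrite cF.
have [S1 G1] := Good_card le2 G.
exists (F * F)%type, (Xsq S1); split; last by rewrite -cF; exact: Good_sq.
by rewrite card_prod cF expnD.
Qed.

Lemma main t : forall m, 0 < m <= 2 ^ t ->
  exists (T : finType) (S : seq {ffun T -> nat}) lam,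
    [/\ 2 ^ m <= #|T|, Good S lam & lam <= 6 ^ t * 2 ^ m].
Proof.
elim: t => [|t IH] m hm.
  rewrite expn0 in hm; have -> : m = 1 by lia.
  by have [S G] := Good_bool; exists bool, S, 1; split; rewrite ?card_bool.
have [le|gt] := leqP m (2 ^ t).
  have [T [S [lam [c G b]]]] : exists (T : finType) (S : seq {ffun T -> nat}) lam,
    [/\ 2 ^ m <= #|T|, Good S lam & lam <= 6 ^ t * 2 ^ m] by apply: IH; lia.
  exists T, S, lam; split => //; apply: leq_trans b _.
  by rewrite leq_mul2r expnS leq_pmull ?orbT.
pose m' := m.+1 %/ 2.
have hm' : 0 < m' <= 2 ^ t by rewrite expnS in hm; lia.
have [T [S [lam [c G b]]]] := IH m' hm'.
have m'0 : 0 < m' by lia.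
have [T' [S' [c' G']]] := step m'0 c G.
exists T', S', (2 * lam * (2 ^ m').+1); split => //.
  apply: leq_trans c'; rewrite leq_exp2l //; lia.
have q2 : 2 <= 2 ^ m' by rewrite -{1}(expn1 2) leq_exp2l.
have qq : 2 ^ m' * 2 ^ m' <= 2 * 2 ^ m.
  by rewrite -expnD -expnS leq_exp2l //; lia.
rewrite expnS.
move: (2 ^ m') (2 ^ m) (6 ^ t) q2 qq b => q M A q2 qq b.
have h1 : q * q.+1 <= 3 * M by nia.
have h2 : lam * q.+1 <= A * q * q.+1 by rewrite leq_mul2r b orbT.
have h3 : A * (q * q.+1) <= A * (3 * M) by rewrite leq_mul2l h1 orbT.
rewrite mulnA in h3; nia.
Qed.

Delimit Scope R_scope with R.

Lemma expn67 k : expn 6 k <= expn 7 k.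
Proof. elim: k => // k IH; rewrite !expnS; exact: leq_mul. Qed.

Theorem lemma3p3 :
  exists C : R, forall n : nat, (3 <= n)%N ->
    g_le n 3 (C * INR n * Rpower (log2 (INR n)) (log2 7))%R.
Proof.
exists 12%R => n n3.
have n1 : 1 < n by lia.
have /andP [hm1 hm2] := up_log_bounds (isT : 1 < 2) n1.
move: hm1 hm2; set m := up_log 2 n => hm1 hm2.
have m2 : 1 < m.
  rewrite ltnNge; apply/negP => hle.
  have : expn 2 m <= expn 2 1 by rewrite leq_exp2l.
  rewrite expn1; lia.
have /andP [ht1 ht2] := up_log_bounds (isT : 1 < 2) m2.
move: ht1 ht2; set t := up_log 2 m => ht1 ht2.
have t1 : 0 < t by rewrite /t up_log_gt0.
have hmt : 0 < m <= expn 2 t by rewrite ht2 andbT; lia.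
have [T [S [lam [c G b]]]] := @main t m hmt.
have [X HX] := Good_PSCA G (ltnW (ltnW n3)) (leq_trans hm2 c).
exists X, lam; split => //.
have hK : expn 2 (expn 2 t.-1) <= n.
  apply: leq_trans (ltnW hm1); rewrite leq_exp2l //; lia.
have hl0 := log2_ge _ _ hK; rewrite INR_expn /= in hl0.
have hl := key_real _ _ hl0.
have hb : lam <= 12 * n * expn 7 t.-1.
  have e1 : expn 6 t = 6 * expn 6 t.-1 by rewrite -expnS prednK.
  have e2 : expn 2 m = 2 * expn 2 m.-1 by rewrite -expnS prednK //; lia.
  rewrite e1 e2 in b; have := expn67 t.-1; nia.
have h0 : (0 <= INR n)%R by apply: pos_INR.
eapply Rle_trans; first by apply: le_INR; apply/leP; exact: hb.
rewrite !mult_INR INR_expn.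
have -> : INR 12 = 12%R by rewrite /=; lra.
have -> : INR 7 = 7%R by rewrite /=; lra.
apply: Rmult_le_compat_l => //; lra.
Qed.
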